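(* Let $U\subseteq F^d$ be open, $\mathbf x_0\in U$, $f=(f_1,\dots,f_n):U\to F^n$ satisfy (II), (III), (IV) and $\theta:U\to F$ satisfy (VI). Then for every sufficiently small neighbourhood $V\subseteq U$ of $\mathbf x_0$ there exists $M_0>1$ such that $$\inf_{(\mathbf a,a_0)\in F^{n}\times F,\ \|\mathbf a\|\ge M_0}\ \sup_{\mathbf x\in V}|a_0+\mathbf a\cdot f(\mathbf x)+\theta(\mathbf x)|>0.$$
   Context: $F=\mathbb F_q((X^{-1}))$ with $|a|=q^{\deg a}$, sup norm on $F^k$. Difference quotients $\Phi_\beta$ with continuous extensions $\bar\Phi_\beta$ ($\Phi^kg(x_1,\dots,x_{k+1})=\frac{\Phi^{k-1}g(x_1,x_3,\dots)-\Phi^{k-1}g(x_2,x_3,\dots)}{x_1-x_2}$, iterated per variable). (II) $f$ analytic, extends analytically to the boundary of $U$, $f_1(\mathbf x)=x_1$. (III) $1,f_1,\dots,f_n$ restricted to any open subset of $U$ are linearly independent over $F$. (IV) $\|f\|\le1$, $\|\nabla f\|\le1$, $\|\bar\Phi_\beta f(\cdot)\|\le1$ for all $|\beta|=2$. (VI) $\theta$ analytic, extends analytically to the boundary, $|\theta|\le1$, $\|\nabla\theta\|\le1$, $|\bar\Phi_\beta\theta(\cdot)|\le1$ for all $|\beta|=2$. *)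

(* Defs.v *)
From HB Require Import structures.
From mathcomp Require Import all_boot all_order all_algebra.
From mathcomp Require Import boolp classical_sets reals Rstruct.
From Stdlib Require Rdefinitions.

Set Implicit Arguments.
Unset Strict Implicit.
Unset Printing Implicit Defensive.

Import Order.TTheory GRing.Theory Num.Theory.
Local Open Scope classical_set_scope.
Local Open Scope ring_scope.
Local Notation R := Rdefinitions.R.

(* The field F = F_q((X^{-1})) of Laurent series in X^{-1} over a finite    *)
(* field K with q = #|K| elements.  An element is a coefficient function    *)
(* a : int -> K (a m = coefficient of X^m) with support bounded above.      *)

Section Laurent.
Variable K : finFieldType.

Definition LS := {a : int -> K | exists N : int, forall m : int, N < m -> a m = 0}.

Definition coef (a : LS) : int -> K := proj1_sig a.

Definition LS_zero : LS.
Proof. exists (fun _ => 0); by exists 0. Defined.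

Definition LS_one : LS.
Proof.
exists (fun m : int => if m == 0 then 1 else 0).
by exists 0 => m hm; rewrite gt_eqF.
Defined.

Definition LS_add (a b : LS) : LS.
Proof.
exists (fun m => coef a m + coef b m).
case: (proj2_sig a) => Na Ha; case: (proj2_sig b) => Nb Hb.
exists (Num.max Na Nb) => m hm.
rewrite /coef Ha ?Hb ?addr0 //.
  by apply: le_lt_trans hm; rewrite le_max lexx orbT.
by apply: le_lt_trans hm; rewrite le_max lexx.
Defined.

Definition LS_opp (a : LS) : LS.
Proof.
exists (fun m => - coef a m).
case: (proj2_sig a) => Na Ha; exists Na => m hm.
by rewrite /coef Ha // oppr0.
Defined.

Definition LS_sub (a b : LS) : LS := LS_add a (LS_opp b).

Definition LS_deg (a : LS) : int :=
  match pselect (exists d : int, coef a d != 0 /\ forall m, d < m -> coef a m = 0) with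
  | left P => projT1 (cid P)
  | right _ => 0
  end.

(* Cauchy product: (ab)_m = sum_{i+j=m} a_i b_j, a finite sum *)
Definition LS_mul (a b : LS) : LS.
Proof.
exists (fun m : int =>
  if m <= LS_deg a + LS_deg b then
    \sum_(k < (absz (LS_deg a + LS_deg b - m)%R).+1)
       coef a (LS_deg a - k%:Z) * coef b (m - LS_deg a + k%:Z)
  else 0).
exists (LS_deg a + LS_deg b) => m hm.
by rewrite leNgt hm.
Defined.

(* multiplicative inverse (chosen; 0 if none exists, i.e. for a = 0) *)
Definition LS_inv (a : LS) : LS :=
  match pselect (exists b : LS, LS_mul a b = LS_one) with
  | left P => projT1 (cid P)
  | right _ => LS_zero
  end.

Definition LS_div (a b : LS) : LS := LS_mul a (LS_inv b).

Definition LS_abs (a : LS) : R :=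
  match pselect (exists m : int, coef a m != 0) with
  | left _ => ((#|K|%:R : R) ^ (LS_deg a))%R
  | right _ => 0
  end.

Definition LS_exp (a : LS) (k : nat) : LS := iter k (LS_mul a) LS_one.

Definition vsub (k : nat) (x y : 'I_k -> LS) : 'I_k -> LS := fun i => LS_sub (x i) (y i).

Definition vnorm (k : nat) (x : 'I_k -> LS) : R :=
  \big[Num.max/0]_(i < k) LS_abs (x i).

Definition vball (k : nat) (x : 'I_k -> LS) (r : R) : set ('I_k -> LS) :=
  [set y | vnorm (vsub y x) < r].

Definition vopen (k : nat) (U : set ('I_k -> LS)) : Prop :=
  forall x, U x -> exists2 r : R, 0 < r & vball x r `<=` U.

Definition vnbhd (k : nat) (x : 'I_k -> LS) (V : set ('I_k -> LS)) : Prop :=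
  exists2 r : R, 0 < r & vball x r `<=` V.

Definition vclosure (k : nat) (U : set ('I_k -> LS)) : set ('I_k -> LS) :=
  [set y | forall r : R, 0 < r -> exists2 x, U x & vnorm (vsub x y) < r].

Definition vdot (k : nat) (a b : 'I_k -> LS) : LS :=
  \big[LS_add/LS_zero]_(i < k) LS_mul (a i) (b i).

Definition LS_sum (s : seq LS) : LS := foldr LS_add LS_zero s.

Definition monom (d : nat) (al : {ffun 'I_d -> nat}) (y : 'I_d -> LS) : LS :=
  \big[LS_mul/LS_one]_(i < d) LS_exp (y i) (al i).

Definition has_sum (d : nat) (t : {ffun 'I_d -> nat} -> LS) (s : LS) : Prop :=
  forall e : R, 0 < e -> exists S : seq {ffun 'I_d -> nat},
    forall T : seq {ffun 'I_d -> nat}, uniq T -> {subset S <= T} ->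
      LS_abs (LS_sub (LS_sum (map t T)) s) < e.

Definition analytic_on (d : nat) (W : set ('I_d -> LS)) (g : ('I_d -> LS) -> LS) : Prop :=
  forall x0, W x0 -> exists c : {ffun 'I_d -> nat} -> LS,
    exists2 r : R, 0 < r & vball x0 r `<=` W /\
      forall x, vball x0 r x ->
        has_sum (fun al => LS_mul (c al) (monom al (vsub x x0))) (g x).

Definition analytic_to_boundary (d : nat) (U : set ('I_d -> LS)) (g : ('I_d -> LS) -> LS) : Prop :=
  analytic_on U g /\
  exists W : set ('I_d -> LS), [/\ vopen W, vclosure U `<=` W &
    exists2 h, analytic_on W h & forall x, U x -> h x = g x].

Definition vupd (d : nat) (x : 'I_d -> LS) (i : 'I_d) (t : LS) : 'I_d -> LS :=
  fun j => if j == i then t else x j.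

Definition is_partial (d : nat) (U : set ('I_d -> LS)) (g : ('I_d -> LS) -> LS)
    (i : 'I_d) (x : 'I_d -> LS) (L : LS) : Prop :=
  forall e : R, 0 < e -> exists2 del : R, 0 < del &
    forall t : LS, 0 < LS_abs t -> LS_abs t < del ->
      U (vupd x i (LS_add (x i) t)) ->
      LS_abs (LS_sub (LS_div (LS_sub (g (vupd x i (LS_add (x i) t))) (g x)) t) L) < e.

Definition grad_le1 (d : nat) (U : set ('I_d -> LS)) (g : ('I_d -> LS) -> LS) : Prop :=
  forall x, U x -> forall i : 'I_d, exists2 L, is_partial U g i x L & LS_abs L <= 1.

(* Difference quotients Phi_beta.  A "multi-point" P : 'I_d -> seq F gives *)
(* for each variable i the list of values (x_1, ..., x_{k+1}) taken by that *)
(* variable.                                                                 *)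

Definition mupd (d : nat) (P : 'I_d -> seq LS) (i : 'I_d) (s : seq LS) : 'I_d -> seq LS :=
  fun j => if j == i then s else P j.

Definition phi1 (d : nat) (i : 'I_d) (G : ('I_d -> seq LS) -> LS) (P : 'I_d -> seq LS) : LS :=
  match P i with
  | x1 :: x2 :: rest =>
      LS_div (LS_sub (G (mupd P i (x1 :: rest))) (G (mupd P i (x2 :: rest))))
             (LS_sub x1 x2)
  | _ => LS_zero
  end.

Definition lift0 (d : nat) (g : ('I_d -> LS) -> LS) (P : 'I_d -> seq LS) : LS :=
  g (fun i => head LS_zero (P i)).

Definition Phi (d : nat) (beta : 'I_d -> nat) (g : ('I_d -> LS) -> LS) : ('I_d -> seq LS) -> LS :=
  foldr (fun i G => iter (beta i) (phi1 i) G) (lift0 g) (enum 'I_d).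

(* multi-points of shape beta all of whose "grid points" lie in U:
   domain of the continuous extension bar Phi_beta *)
Definition Dbar (d : nat) (beta : 'I_d -> nat) (U : set ('I_d -> LS)) : set ('I_d -> seq LS) :=
  [set P | (forall i, size (P i) = (beta i).+1) /\
     forall c : 'I_d -> nat, (forall i, (c i < size (P i))%N) ->
       U (fun i => nth LS_zero (P i) (c i))].

(* those with pairwise distinct values in each variable: domain of Phi_beta *)
Definition Dphi (d : nat) (beta : 'I_d -> nat) (U : set ('I_d -> LS)) : set ('I_d -> seq LS) :=
  [set P | Dbar beta U P /\
     forall i (k l : nat), (k < size (P i))%N -> (l < size (P i))%N -> k <> l ->
       nth LS_zero (P i) k <> nth LS_zero (P i) l].

Definition mdist (d : nat) (beta : 'I_d -> nat) (P Q : 'I_d -> seq LS) : R :=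
  \big[Num.max/0]_(i < d) \big[Num.max/0]_(k < (beta i).+1)
     LS_abs (LS_sub (nth LS_zero (P i) k) (nth LS_zero (Q i) k)).

Definition barPhi_le1 (d : nat) (beta : 'I_d -> nat) (U : set ('I_d -> LS))
    (g : ('I_d -> LS) -> LS) : Prop :=
  exists G : ('I_d -> seq LS) -> LS,
    [/\ (forall P, Dbar beta U P -> forall e : R, 0 < e -> exists2 del : R, 0 < del &
           forall Q, Dbar beta U Q -> mdist beta P Q < del ->
             LS_abs (LS_sub (G Q) (G P)) < e),
        (forall P, Dphi beta U P -> G P = Phi beta g P) &
        (forall P, Dbar beta U P -> LS_abs (G P) <= 1)].

End Laurent.

(* Main.v *)
Require Import Defs.
From HB Require Import structures.
From mathcomp Require Import all_boot all_order all_algebra.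
From mathcomp Require Import boolp classical_sets reals Rstruct.
From mathcomp Require Import zify lra.
From Stdlib Require Rdefinitions.
Import Order.TTheory GRing.Theory Num.Theory.
Local Open Scope classical_set_scope.
Local Open Scope ring_scope.

Set Implicit Arguments.
Unset Strict Implicit.
Local Notation R := Rdefinitions.R.

Section LSTheory.
Variable K : finFieldType.
Local Notation LS := (LS K).
Local Notation coef := (@coef K).

Lemma LS_ext (a b : LS) : (forall m, coef a m = coef b m) -> a = b.
Proof.
case: a => a Ha; case: b => b Hb /= H.
have E : a = b by apply: funext.
subst b; congr exist; exact: Prop_irrelevance.
Qed.

Definition ubd (a : LS) (B : int) := forall i, B < i -> coef a i = 0.

Lemma ubd_mono a B B' : B <= B' -> ubd a B -> ubd a B'.
Proof. move=> le H i hi; apply: H; exact: le_lt_trans hi. Qed.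

Definition nz (a : LS) := exists m, coef a m != 0.

Lemma nzP a : nz a <-> a <> LS_zero K.
Proof.
split.
  by case=> m hm E; move: hm; rewrite E /= eqxx.
move=> H; have [//|nH] := pselect (nz a); exfalso; apply: H; apply: LS_ext => m /=.
by apply/eqP/negPn/negP => hm; apply: nH; exists m.
Qed.

Lemma deg_exists a : nz a ->
  exists d : int, coef a d != 0 /\ forall m, d < m -> coef a m = 0.
Proof.
case=> m0 hm0; case: (proj2_sig a) => N HN.
have m0N : m0 <= N.
  rewrite leNgt; apply/negP => h; move: hm0; by rewrite /Defs.coef HN ?eqxx.
have exP : exists k : nat, coef a (N - k%:Z) != 0.
  have e : N - (N - m0) = m0 by lia.
  by exists (absz (N - m0)); rewrite gez0_abs ?subr_ge0 // e.
case: (ex_minnP exP) => k hk kmin.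
exists (N - k%:Z); split => // m hm.
case: (lerP m N) => hmN; last exact: HN.
apply/eqP/negPn/negP => hne.
have := kmin (absz (N - m)).
have e : N - (N - m) = m by lia.
rewrite gez0_abs ?subr_ge0 // e => /(_ hne) le.
move: hm; rewrite ltNge => /negP; apply; lia.
Qed.

Lemma deg_spec a : nz a -> coef a (LS_deg a) != 0 /\ ubd a (LS_deg a).
Proof.
move=> na; rewrite /LS_deg; case: pselect => [P|nP]; last by exfalso; apply: nP; exact: (@deg_exists a na).
by case: (cid P) => d [].
Qed.

Lemma deg_ub a : ubd a (LS_deg a).
Proof.
case: (pselect (nz a)) => [na|nna]; first by case: (deg_spec na).
move=> i _; apply/eqP/negPn/negP => h; apply: nna; by exists i.
Qed.

Lemma deg_unique a d : coef a d != 0 -> ubd a d -> LS_deg a = d.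
Proof.
move=> h1 h2; have na : nz a by exists d.
case: (deg_spec na) => h3 h4.
apply/eqP; rewrite eq_le; apply/andP; split.
  by rewrite leNgt; apply/negP => lt; move: h3; rewrite h2 ?eqxx.
by rewrite leNgt; apply/negP => lt; move: h1; rewrite h4 ?eqxx.
Qed.

Lemma nz_le a i : coef a i != 0 -> forall B, ubd a B -> i <= B.
Proof. move=> h B hB; rewrite leNgt; apply/negP => lt; move: h; by rewrite hB ?eqxx. Qed.

Definition isum (lo : int) (n : nat) (F : int -> K) := \sum_(k < n) F (lo + k%:Z).

Lemma isum_split lo n t F :
  isum lo (n + t) F = isum lo n F + \sum_(k < t) F (lo + (n + k)%:Z).
Proof. by rewrite /isum big_split_ord. Qed.

Lemma isum_down lo n t F : (forall k, (k < t)%N -> F (lo - t%:Z + k%:Z) = 0) ->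
  isum (lo - t%:Z) (t + n) F = isum lo n F.
Proof.
move=> H; rewrite /isum big_split_ord /= big1 ?add0r; last by move=> i _; apply: H.
apply: eq_bigr => i _; congr F; rewrite PoszD; lia.
Qed.

Lemma isum_up lo n t F : (forall k, (k < t)%N -> F (lo + (n + k)%:Z) = 0) ->
  isum lo (n + t) F = isum lo n F.
Proof. by move=> H; rewrite isum_split big1 ?addr0 // => i _; apply: H. Qed.

Lemma isum_big lo n lo0 n0 F :
  (forall i, F i != 0 -> lo <= i < lo + n%:Z) -> lo0 <= lo -> lo + n%:Z <= lo0 + n0%:Z ->
  isum lo0 n0 F = isum lo n F.
Proof.
move=> S h1 h2.
pose t := absz (lo - lo0); pose u := (n0 - t - n)%N.
have e1 : lo0 = lo - t%:Z by rewrite /t gez0_abs ?subr_ge0 //; lia.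
have e2 : n0 = (t + (n + u))%N by rewrite /u /t; lia.
rewrite e1 e2 isum_down ?isum_up //.
  move=> k hk; apply/eqP; apply: contraTT isT => /S; lia.
move=> k hk; apply/eqP; apply: contraTT isT => /S; lia.
Qed.

Lemma isum_eq lo n lo' n' F :
  (forall i, F i != 0 -> (lo <= i < lo + n%:Z) /\ (lo' <= i < lo' + n'%:Z)) ->
  isum lo n F = isum lo' n' F.
Proof.
move=> S.
pose L := Num.min lo lo'; pose H := Num.max (lo + n%:Z) (lo' + n'%:Z).
pose N := absz (H - L).
have eN : L + N%:Z = H.
  rewrite /N gez0_abs; first by rewrite addrCA subrr addr0.
  by rewrite subr_ge0 /L /H ge_min !le_max !lerDl.
rewrite -(@isum_big lo n L N) ?eN ?ge_min ?le_max ?lexx //; last by move=> i /S [].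
rewrite -(@isum_big lo' n' L N) ?eN ?ge_min ?le_max ?lexx ?orbT //; last by move=> i /S [].
Qed.

Lemma isum_rev lo n c F :
  isum lo n F = isum (c - (lo + n%:Z - 1)) n (fun j => F (c - j)).
Proof.
rewrite /isum (reindex_inj rev_ord_inj) /=; apply: eq_bigr => i _; congr F.
have := ltn_ord i; lia.
Qed.

Lemma isum0 lo n F : (forall i, F i = 0) -> isum lo n F = 0.
Proof. by move=> H; rewrite /isum big1. Qed.


Lemma LScoefD (a b : LS) m : coef (LS_add a b) m = coef a m + coef b m.
Proof. by []. Qed.
Lemma LScoefN (a : LS) m : coef (LS_opp a) m = - coef a m.
Proof. by []. Qed.
Lemma LScoef0 m : coef (LS_zero K) m = 0.
Proof. by []. Qed.

Definition n_of (lo A : int) : nat := (absz (A - lo)%R).+1.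
Lemma n_ofP lo A : A < lo + (n_of lo A)%:Z.
Proof. rewrite /n_of; lia. Qed.

Definition Fm (a b : LS) (m : int) := fun i => coef a i * coef b (m - i).

Lemma Fm_supp a b m A B i : ubd a A -> ubd b B -> Fm a b m i != 0 -> i <= A /\ m - B <= i.
Proof.
move=> hA hB; rewrite /Fm mulf_eq0 negb_or => /andP [h1 h2].
have := nz_le h1 hA; have := nz_le h2 hB; lia.
Qed.

Lemma LScoef_mul a b m lo n A B : ubd a A -> ubd b B -> lo <= m - B -> A < lo + n%:Z ->
  coef (LS_mul a b) m = isum lo n (Fm a b m).
Proof.
move=> hA hB hlo hn.
rewrite /Defs.coef /LS_mul /= -/(Defs.coef _).
have ha := (@deg_ub a); have hb := (@deg_ub b).
case: ifP => hm.
  pose N := (absz (LS_deg a + LS_deg b - m)%R).+1.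
  have -> : \sum_(k < N) coef a (LS_deg a - k%:Z) * coef b (m - LS_deg a + k%:Z)
           = isum (m - LS_deg b) N (Fm a b m).
    rewrite (isum_rev _ _ 0) /isum; apply: eq_bigr => k _; rewrite /Fm.
    congr (coef _ _ * coef _ _); rewrite /N; lia.
  apply: isum_eq => i /[dup] h /(Fm_supp ha hb) h1; move: h => /(Fm_supp hA hB) h2.
  rewrite /N; lia.
rewrite isum0 // => i; apply/eqP/negPn/negP => /(Fm_supp ha hb); move: hm; lia.
Qed.

Lemma ubd_mul a b A B : ubd a A -> ubd b B -> ubd (LS_mul a b) (A + B).
Proof.
move=> hA hB m hm; rewrite (LScoef_mul (lo := m - B) (n := n_of (m - B) A) hA hB) ?lexx ?n_ofP //.
rewrite isum0 // => i; apply/eqP/negPn/negP => /(Fm_supp hA hB); lia.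
Qed.

Lemma LS_mulC (a b : LS) : LS_mul a b = LS_mul b a.
Proof.
apply: LS_ext => m; have hA := (@deg_ub a); have hB := (@deg_ub b).
set A := LS_deg a in hA *; set B := LS_deg b in hB *.
pose lo := m - B; pose n := n_of lo A.
have hn := n_ofP lo A.
rewrite (LScoef_mul (lo := lo) (n := n) hA hB) ?lexx //.
rewrite (isum_rev _ _ m).
rewrite (LScoef_mul (lo := m - (lo + n%:Z - 1)) (n := n) hB hA); last 2 first.
- rewrite /lo /n /n_of; lia.
- rewrite /lo; lia.
rewrite /isum; apply: eq_bigr => k _; rewrite /Fm mulrC; congr (coef _ _ * coef _ _); lia.
Qed.

Lemma LS_mulA (a b c : LS) : LS_mul a (LS_mul b c) = LS_mul (LS_mul a b) c.
Proof.
apply: LS_ext => m; have hA := (@deg_ub a); have hB := (@deg_ub b); have hC := (@deg_ub c).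
set A := LS_deg a in hA *; set B := LS_deg b in hB *; set C := LS_deg c in hC *.
pose lo1 := m - C; pose n1 := n_of lo1 (A + B); have hn1 := n_ofP lo1 (A + B).
pose lo2 := lo1 - B; pose n2 := n_of lo2 A; have hn2 := n_ofP lo2 A.
rewrite (LScoef_mul (lo := lo1) (n := n1) (ubd_mul hA hB) hC) ?lexx //.
rewrite (LScoef_mul (lo := lo2) (n := n2) hA (ubd_mul hB hC)); last 2 first.
- rewrite /lo2 /lo1; lia.
- done.
rewrite /isum /Fm; symmetry.
under eq_bigr => k _.
  rewrite (LScoef_mul (lo := lo2) (n := n2) hA hB); last 2 first.
  - rewrite /lo2; lia.
  - done.
  rewrite /isum /Fm mulr_suml.
  over.
rewrite exchange_big; apply: eq_bigr => l _.
have [a0|anz] := eqVneq (coef a (lo2 + l%:Z)) 0.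
  rewrite a0 mul0r big1 // => k _; by rewrite mul0r mul0r.
rewrite (LScoef_mul (lo := lo1 - (lo2 + l%:Z)) (n := n1) hB hC); last 2 first.
- lia.
- have := nz_le anz hA; lia.
rewrite /isum /Fm mulr_sumr; apply: eq_bigr => k _.
rewrite mulrA; congr (_ * coef _ _ * coef _ _); lia.
Qed.

Lemma ubd_add a b A B : ubd a A -> ubd b B -> ubd (LS_add a b) (Num.max A B).
Proof.
move=> hA hB i hi; rewrite /Defs.coef /= -!/(Defs.coef _) hA ?hB ?addr0 //.
  by apply: le_lt_trans hi; rewrite le_max lexx orbT.
by apply: le_lt_trans hi; rewrite le_max lexx.
Qed.

Lemma LS_mulDl (a b c : LS) : LS_mul (LS_add a b) c = LS_add (LS_mul a c) (LS_mul b c).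
Proof.
apply: LS_ext => m; have hA := (@deg_ub a); have hB := (@deg_ub b); have hC := (@deg_ub c).
set A := LS_deg a in hA *; set B := LS_deg b in hB *; set C := LS_deg c in hC *.
pose M := Num.max A B.
have hA' : ubd a M by apply: ubd_mono hA; rewrite le_max lexx.
have hB' : ubd b M by apply: ubd_mono hB; rewrite le_max lexx orbT.
pose lo := m - C; pose n := n_of lo M; have hn := n_ofP lo M.
rewrite [LHS](LScoef_mul (lo := lo) (n := n) (ubd_add hA hB) hC) ?lexx //.
rewrite LScoefD.
rewrite (LScoef_mul (lo := lo) (n := n) hA' hC) ?lexx //.
rewrite (LScoef_mul (lo := lo) (n := n) hB' hC) ?lexx //.
rewrite /isum -big_split /=; apply: eq_bigr => k _; rewrite /Fm LScoefD.
by rewrite mulrDl.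
Qed.

Lemma ubd_one : ubd (LS_one K) 0.
Proof. by move=> i hi; rewrite /Defs.coef /= gt_eqF. Qed.

Lemma LS_mul1 (a : LS) : LS_mul (LS_one K) a = a.
Proof.
apply: LS_ext => m; have hA := (@deg_ub a); set A := LS_deg a in hA *.
pose lo := m - A; pose n := n_of lo 0; have hn := n_ofP lo 0.
rewrite (LScoef_mul (lo := lo) (n := n) ubd_one hA) ?lexx //.
have -> : isum lo n (Fm (LS_one K) a m) = isum 0 1 (Fm (LS_one K) a m).
  apply: isum_eq => i; rewrite /Fm {1}/Defs.coef /=.
  case: ifP => [/eqP ->|_]; last by rewrite mul0r eqxx.
  rewrite mul1r subr0 => h; have := nz_le h hA; rewrite /lo /n; lia.
by rewrite /isum big_ord1 /Fm /Defs.coef /= subr0 mul1r.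
Qed.

End LSTheory.

Section Zm.
Variable K : finFieldType.
Lemma LS_addA (a b c : LS K) : LS_add a (LS_add b c) = LS_add (LS_add a b) c.
Proof. by apply: LS_ext => m; rewrite !LScoefD addrA. Qed.
Lemma LS_addC (a b : LS K) : LS_add a b = LS_add b a.
Proof. by apply: LS_ext => m; rewrite !LScoefD addrC. Qed.
Lemma LS_add0 (a : LS K) : LS_add (LS_zero K) a = a.
Proof. by apply: LS_ext => m; rewrite !LScoefD LScoef0 add0r. Qed.
Lemma LS_addN (a : LS K) : LS_add (LS_opp a) a = LS_zero K.
Proof. by apply: LS_ext => m; rewrite !LScoefD LScoefN LScoef0 addNr. Qed.
End Zm.

HB.instance Definition _ (K : finFieldType) := gen_eqMixin (LS K).
HB.instance Definition _ (K : finFieldType) := gen_choiceMixin (LS K).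
HB.instance Definition _ (K : finFieldType) :=
  GRing.isZmodule.Build (LS K) (@LS_addA K) (@LS_addC K) (@LS_add0 K) (@LS_addN K).

Lemma LS_one_neq0 (K : finFieldType) : LS_one K != LS_zero K.
Proof.
apply/eqP => E; have := congr1 (fun a => Defs.coef a 0) E.
by rewrite /Defs.coef /= => /eqP; rewrite oner_eq0.
Qed.

HB.instance Definition _ (K : finFieldType) :=
  GRing.Zmodule_isComNzRing.Build (LS K) (@LS_mulA K) (@LS_mulC K) (@LS_mul1 K)
    (@LS_mulDl K) (@LS_one_neq0 K).

Section T.
Variable K : finFieldType.
Lemma vdotE n (a b : 'I_n -> LS K) : vdot a b = \sum_(i < n) a i * b i.
Proof. by []. Qed.
End T.

Section Abs.
Variable K : finFieldType.
Local Notation LS := (LS K).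
Local Notation coef := (@Defs.coef K).
Local Notation q := (#|K|%:R : R).

Lemma q_gt1 : 1 < q.
Proof. by rewrite ltr1n; apply: card_finNzRing_gt1. Qed.
Lemma q_gt0 : 0 < q.
Proof. exact: lt_trans ltr01 q_gt1. Qed.

Lemma abs_nz (a : LS) : nz a -> LS_abs a = q ^ LS_deg a.
Proof. by rewrite /LS_abs; case: pselect. Qed.
Lemma abs_z (a : LS) : ~ nz a -> LS_abs a = 0.
Proof. by rewrite /LS_abs; case: pselect. Qed.

Lemma abs0 : LS_abs (0 : LS) = 0.
Proof. by apply: abs_z => /nzP. Qed.

Lemma abs_ge0 (a : LS) : 0 <= LS_abs a.
Proof.
case: (pselect (nz a)) => h; last by rewrite abs_z.
by rewrite abs_nz // ltW // exprz_gt0 // q_gt0.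
Qed.

Lemma abs_gt0 (a : LS) : a != 0 -> 0 < LS_abs a.
Proof. move=> /eqP/nzP h; by rewrite abs_nz // exprz_gt0 // q_gt0. Qed.

Lemma qX_le (m k : int) : m <= k -> q ^ m <= q ^ k.
Proof. by move=> h; apply: ler_weXz2l => //; apply: ltW; apply: q_gt1. Qed.

Lemma abs_le_deg (a : LS) i : coef a i != 0 -> q ^ i <= LS_abs a.
Proof.
move=> h; have na : nz a by exists i.
by rewrite abs_nz //; apply: qX_le; apply: nz_le h _ (deg_ub (a := a)).
Qed.

Lemma abs_add (a b : LS) : LS_abs (a + b) <= Num.max (LS_abs a) (LS_abs b).
Proof.
case: (pselect (nz (a + b))) => h; last first.
  by rewrite abs_z // le_max abs_ge0.
case: (deg_spec h) => h1 _; rewrite abs_nz //.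
move: h1; rewrite LScoefD => h1.
have [ha|ha] := eqVneq (coef a (LS_deg (a + b))) 0.
  move: h1; rewrite ha add0r => hb.
  by rewrite le_max (abs_le_deg hb) orbT.
by rewrite le_max (abs_le_deg ha).
Qed.

Lemma abs_addle (a b : LS) : LS_abs (a + b) <= LS_abs a + LS_abs b.
Proof.
apply: le_trans (abs_add a b) _; rewrite ge_max.
by rewrite lerDl lerDr !abs_ge0.
Qed.

Lemma absN (a : LS) : LS_abs (- a) = LS_abs a.
Proof.
case: (pselect (nz a)) => h; last first.
  rewrite !abs_z // => -[m hm]; apply: h; exists m; move: hm; by rewrite LScoefN oppr_eq0.
have h' : nz (- a) by case: h => m hm; exists m; rewrite LScoefN oppr_eq0.
rewrite !abs_nz //; congr (_ ^ _); apply: deg_unique.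
  by rewrite LScoefN oppr_eq0; case: (deg_spec h).
by move=> i hi; rewrite LScoefN (deg_ub (a := a)) // oppr0.
Qed.

Lemma nz_eq0 (a : LS) : ~ nz a -> a = 0.
Proof. by move=> h; apply/eqP/negPn/negP => /eqP /nzP. Qed.

Lemma abs_mul (a b : LS) : LS_abs (a * b) = LS_abs a * LS_abs b.
Proof.
case: (pselect (nz a)) => ha; last by rewrite (nz_eq0 ha) mul0r abs0 mul0r.
case: (pselect (nz b)) => hb; last by rewrite (nz_eq0 hb) mulr0 abs0 mulr0.
case: (deg_spec ha) => ha1 ha2; case: (deg_spec hb) => hb1 hb2.
have e : coef (a * b) (LS_deg a + LS_deg b) = coef a (LS_deg a) * coef b (LS_deg b).
  rewrite (LScoef_mul (lo := LS_deg a) (n := 1%N) ha2 hb2); last 2 first.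
  - lia.
  - lia.
  rewrite /isum big_ord1 /Fm addr0; congr (_ * coef _ _); lia.
have nab : nz (a * b) by exists (LS_deg a + LS_deg b); rewrite e mulf_neq0.
rewrite !abs_nz // (deg_unique (d := LS_deg a + LS_deg b)).
- by rewrite exprzDr // unitfE gt_eqF // q_gt0.
- by rewrite e mulf_neq0.
- exact: ubd_mul.
Qed.

Lemma abs_sum n (F : 'I_n -> LS) : LS_abs (\sum_(i < n) F i) <= \sum_(i < n) LS_abs (F i).
Proof.
elim/big_rec2: _; first by rewrite abs0.
by move=> i y1 y2 _ h; apply: le_trans (abs_addle _ _) _; rewrite lerD2l.
Qed.

Lemma abs_strict (u t : LS) : LS_abs t < LS_abs u -> LS_abs u <= LS_abs (u + t).
Proof.
move=> h; have := abs_add (u + t) (- t); rewrite addrK absN le_max => /orP [] // h2.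
by move: h; rewrite ltNge h2.
Qed.

Definition LS_X (N : int) : LS.
Proof.
exists (fun m : int => if m == N then 1 else 0).
by exists N => m hm; rewrite gt_eqF.
Defined.

Lemma abs_X N : LS_abs (LS_X N) = q ^ N.
Proof.
have h : coef (LS_X N) N != 0 by rewrite /Defs.coef /= eqxx oner_eq0.
rewrite abs_nz; last by exists N.
rewrite (deg_unique h) // => m hm; by rewrite /Defs.coef /= gt_eqF.
Qed.

End Abs.

Section Pts.
Variables (K : finFieldType) (n : nat) (T : Type) (W : set T) (G : nat -> T -> LS K) (x0 : T).
Hypothesis indep : forall c : nat -> LS K,
  (forall x, W x -> \sum_(j < n) c j * G j x = 0) -> forall j, (j < n)%N -> c j = 0.
Hypothesis Wx0 : W x0.

Lemma points m : (m <= n)%N -> exists y : 'I_m -> T,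
  (forall k, W (y k)) /\ \det (\matrix_(k < m, j < m) G j (y k)) != 0.
Proof.
elim: m => [|m IH] hm.
  by exists (fun _ => x0); split => //; rewrite det_mx00 oner_neq0.
have [y [Wy dy]] := IH (ltnW hm).
pose ext (x : T) : 'I_m.+1 -> T := fun k => if unlift ord_max k is Some k' then y k' else x.
pose A x := \matrix_(k < m.+1, j < m.+1) G j (ext x k).
pose B := \matrix_(k < m, j < m.+1) G j (y k).
pose C (j : 'I_m.+1) := (-1) ^+ ((ord_max : 'I_m.+1) + j)%N * \det (col' j B).
have cof : forall x j, cofactor (A x) ord_max j = C j.
  move=> x j; rewrite /cofactor /C; congr (_ * \det _); apply/matrixP => i l.
  by rewrite !mxE /ext liftK.
have hexp : forall x, \det (A x) = \sum_(j < m.+1) G j x * C j.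
  move=> x; rewrite (expand_det_row _ ord_max); apply: eq_bigr => j _.
  by rewrite cof mxE /ext unlift_none.
have Cmax : C ord_max = \det (\matrix_(k < m, j < m) G j (y k)).
  rewrite /C -signr_odd oddD addbb expr0 mul1r; congr (\det _); apply/matrixP => i l.
  rewrite !mxE; congr G; rewrite /= /bump leqNgt ltn_ord //.
case: (pselect (exists x, W x /\ \det (A x) != 0)) => [[x [Wx hx]]|nx].
  exists (ext x); split; last exact: hx.
  by move=> k; rewrite /ext; case: unlift.
exfalso.
pose c (j : nat) := if (j < m.+1)%N then C (inord j) else 0.
have Hc : forall x, W x -> \sum_(j < n) c j * G j x = 0.
  move=> x Wx.
  have h0 : \det (A x) = 0 by apply/eqP/negPn/negP => hx; apply: nx; exists x.
  rewrite -[RHS]h0 hexp.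
  have -> : \sum_(j < m.+1) G j x * C j = \sum_(j < m.+1) c j * G j x.
    by apply: eq_bigr => j _; rewrite /c ltn_ord inord_val mulrC.
  rewrite (big_ord_widen n (fun j => c j * G j x) hm) [RHS]big_mkcond.
  apply: eq_bigr => j _; rewrite /c; case: ifP => _ //; by rewrite mul0r.
have := indep Hc hm; rewrite /c ltnSn.
have -> : (inord m : 'I_m.+1) = ord_max by apply: val_inj; exact: inordK.
rewrite Cmax => E; move: dy; rewrite E => /negP H; apply: H; exact: eqxx.
Qed.
End Pts.

Section Aux.
Variable K : finFieldType.
Local Notation LS := (LS K).

Lemma LS_subE (a b : LS) : LS_sub a b = a - b.
Proof. by []. Qed.

Lemma vnorm_ge k (x : 'I_k -> LS) i : LS_abs (x i) <= vnorm x.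
Proof. exact: le_bigmax. Qed.

Lemma vnorm_lt k (x : 'I_k -> LS) (s : R) : 0 < s -> (forall i, LS_abs (x i) < s) -> vnorm x < s.
Proof. by move=> s0 h; apply: bigmax_lt. Qed.

Lemma vnorm_le k (x : 'I_k -> LS) (s : R) : 0 <= s -> (forall i, LS_abs (x i) <= s) -> vnorm x <= s.
Proof. by move=> s0 h; apply: bigmax_le. Qed.

Lemma vball_open d (x0 : 'I_d -> LS) s : 0 < s -> vopen (vball x0 s).
Proof.
move=> s0 y hy; exists s => // z hz.
rewrite /vball /= in hy hz *.
apply: vnorm_lt => // i; rewrite /vsub LS_subE.
have -> : z i - x0 i = (z i - y i) + (y i - x0 i) by rewrite addrA subrK.
apply: le_lt_trans (abs_add _ _) _; rewrite gt_max.
apply/andP; split.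
  exact: (le_lt_trans (vnorm_ge (vsub z y) i) hz).
exact: (le_lt_trans (vnorm_ge (vsub y x0) i) hy).
Qed.

Lemma vball_center d (x0 : 'I_d -> LS) s : 0 < s -> vball x0 s x0.
Proof. move=> s0; rewrite /vball /=; apply: vnorm_lt => // i; by rewrite /vsub LS_subE subrr abs0. Qed.

Lemma le_sum_single n (F : 'I_n -> R) k : (forall i, 0 <= F i) -> F k <= \sum_(i < n) F i.
Proof. by move=> h; rewrite (bigD1 k) //= lerDl sumr_ge0. Qed.

Variables (n : nat) (hn : (0 < n)%N).
Definition ext (c0 : LS) (c : 'I_n -> LS) (j : nat) : LS :=
  if j is j'.+1 then c (insubd (Ordinal hn) j') else c0.

Lemma ext_S c0 c (i : 'I_n) : ext c0 c i.+1 = c i.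
Proof. by rewrite /ext valKd. Qed.

Lemma sum_ext (e : nat -> LS) c0 c :
  \sum_(j < n.+1) e j * ext c0 c j = e 0%N * c0 + \sum_(i < n) e i.+1 * c i.
Proof. by rewrite big_ord_recl; congr (_ + _); apply: eq_bigr => i _; rewrite lift0 ext_S. Qed.

End Aux.

Unset Implicit Arguments.
Set Strict Implicit.

Theorem mainTheorem7 (K : finFieldType) (d n : nat)
  (hd : (0 < d)%N) (hn : (0 < n)%N)
  (U : set ('I_d -> LS K)) (x0 : 'I_d -> LS K)
  (f : ('I_d -> LS K) -> 'I_n -> LS K) (theta : ('I_d -> LS K) -> LS K) :
  vopen U -> U x0 ->
  (* (II) *)
  (forall j : 'I_n, analytic_to_boundary U (fun x => f x j)) ->
  (forall x, U x -> f x (Ordinal hn) = x (Ordinal hd)) ->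
  (* (III) *)
  (forall W : set ('I_d -> LS K), vopen W -> W `<=` U -> W !=set0 ->
     forall (c0 : LS K) (c : 'I_n -> LS K),
       (forall x, W x -> LS_add c0 (vdot c (f x)) = LS_zero K) ->
       c0 = LS_zero K /\ forall j, c j = LS_zero K) ->
  (* (IV) *)
  (forall x, U x -> vnorm (f x) <= 1) ->
  (forall j : 'I_n, grad_le1 U (fun x => f x j)) ->
  (forall (j : 'I_n) (beta : 'I_d -> nat), (\sum_(i < d) beta i)%N = 2%N ->
     barPhi_le1 beta U (fun x => f x j)) ->
  (* (VI) *)
  analytic_to_boundary U theta ->
  (forall x, U x -> LS_abs (theta x) <= 1) ->
  grad_le1 U theta ->
  (forall beta : 'I_d -> nat, (\sum_(i < d) beta i)%N = 2%N -> barPhi_le1 beta U theta) ->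
  (* conclusion *)
  exists2 r : Rdefinitions.R, 0 < r &
    forall V : set ('I_d -> LS K), V `<=` U -> V `<=` vball x0 r -> vnbhd x0 V ->
      exists2 M0 : Rdefinitions.R, 1 < M0 &
        0 < inf [set sup [set LS_abs (LS_add (LS_add p.2 (vdot p.1 (f x))) (theta x))
                         | x in V]
                | p in [set p : ('I_n -> LS K) * LS K | M0 <= vnorm p.1]].
Proof.
move=> hU hx0 hII hf1 hIII hfn hIVb hIVc hVIa hth hVIc hVId.
exists 1; first exact: ltr01.
move=> V VU _ [s s0 hs].
pose W := vball x0 s.
have Wx0 : W x0 by apply: vball_center.
have WU : W `<=` U by move=> z /hs /VU.
have Wo : vopen W by apply: vball_open.
pose G (j : nat) (x : 'I_d -> LS K) := ext hn 1 (f x) j.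
have indep : forall c : nat -> LS K, (forall x, W x -> \sum_(j < n.+1) c j * G j x = 0) ->
    forall j, (j < n.+1)%N -> c j = 0.
  move=> c hc.
  have H : forall x, W x -> LS_add (c 0%N) (vdot (fun i => c i.+1) (f x)) = LS_zero K.
    move=> x Wx; transitivity (\sum_(j < n.+1) c j * G j x); last exact: hc x Wx.
    by rewrite /G sum_ext mulr1 vdotE.
  have [c00 cS] := hIII W Wo WU (ex_intro _ x0 Wx0) _ _ H.
  move=> [|j] hj; first exact: c00.
  exact: (cS (Ordinal (hj : (j < n)%N))).
have [y [Wy dy]] := points indep Wx0 (leqnn n.+1).
pose M := \matrix_(k < n.+1, j < n.+1) G j (y k).
pose D := \det M.
pose absD := LS_abs D.
have absD0 : 0 < absD by apply: abs_gt0.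
pose Cadj := \sum_(j < n.+1) \sum_(k < n.+1) LS_abs (\adj M j k).
have C0 : 0 <= Cadj by apply: sumr_ge0 => j _; apply: sumr_ge0 => k _; apply: abs_ge0.
pose N := (n.+1)%:R : Rdefinitions.R.
have N0 : 0 < N by rewrite ltr0n.
pose M0 : Rdefinitions.R := 3 * N * (Cadj + 1) / absD + 1.
have M0pos : 0 < 3 * N * (Cadj + 1) / absD.
  by apply: divr_gt0 => //; apply: mulr_gt0; [apply: mulr_gt0 => //| lra].
exists M0; first by rewrite /M0 ltrDr.
have key : forall p : ('I_n -> LS K) * LS K, M0 <= vnorm p.1 ->
    exists k, 2 <= LS_abs (p.2 + vdot p.1 (f (y k))).
  move=> [a a0] /= hM.
  pose u k := a0 + vdot a (f (y k)).
  pose v := \col_(j < n.+1) ext hn a0 a j.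
  have Mv : forall k, (M *m v) k 0 = u k.
    move=> k; rewrite mxE.
    under eq_bigr do rewrite !mxE.
    rewrite (sum_ext hn (fun j => G j (y k))) /G /= mul1r /u vdotE.
    by congr (_ + _); apply: eq_bigr => i _; rewrite valKd mulrC.
  have adjE : forall j, D * v j 0 = \sum_k \adj M j k * u k.
    move=> j; have E : \adj M *m (M *m v) = D *: v by rewrite mulmxA mul_adj_mx mul_scalar_mx.
    transitivity ((\adj M *m (M *m v)) j 0); last first.
      by rewrite mxE; apply: eq_bigr => k _; rewrite Mv.
    by rewrite E !mxE.
  pose Usum := \sum_(k < n.+1) LS_abs (u k).
  have U0 : 0 <= Usum by apply: sumr_ge0 => k _; apply: abs_ge0.
  have ai : forall i, absD * LS_abs (a i) <= Cadj * Usum.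
    move=> i; have := adjE (lift ord0 i); rewrite mxE lift0 ext_S => E.
    rewrite /absD -abs_mul E.
    apply: le_trans (abs_sum _) _.
    apply: le_trans (_ : _ <= \sum_(k < n.+1) LS_abs (\adj M (lift ord0 i) k) * Usum) _.
      apply: ler_sum => k _; rewrite abs_mul; apply: ler_wpM2l; first exact: abs_ge0.
      by rewrite /Usum; apply: le_sum_single => k'; apply: abs_ge0.
    rewrite -mulr_suml; apply: ler_wpM2r => //.
    rewrite /Cadj; apply: (le_sum_single (F := fun j => \sum_(k < n.+1) LS_abs (\adj M j k))) => j.
    by apply: sumr_ge0 => k _; apply: abs_ge0.
  have hv : vnorm a <= Cadj * Usum / absD.
    apply: vnorm_le; first by apply: divr_ge0 => //; [apply: mulr_ge0| apply: ltW].
    by move=> i; rewrite ler_pdivlMr // mulrC.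
  have hU3 : 3 * N <= Usum.
    have h1 : M0 * absD <= Cadj * Usum by rewrite -ler_pdivlMr //; apply: le_trans hM hv.
    have h2 : M0 * absD = 3 * N * (Cadj + 1) + absD.
      by rewrite /M0 mulrDl mul1r mulfVK // gt_eqF.
    rewrite h2 in h1; nra.
  case: (pselect (exists k, 2 <= LS_abs (u k))) => // nk.
  exfalso.
  have : Usum <= \sum_(k < n.+1) (2 : Rdefinitions.R).
    apply: ler_sum => k _; apply: ltW; rewrite ltNge; apply/negP => h; apply: nk; by exists k.
  rewrite sumr_const card_ord -mulr_natr => h; move: hU3; rewrite -/N; lra.
have hub : forall p : ('I_n -> LS K) * LS K,
    has_ubound [set LS_abs (LS_add (LS_add p.2 (vdot p.1 (f x))) (theta x)) | x in V].
  move=> [a a0]; exists (LS_abs a0 + \sum_(i < n) LS_abs (a i) + 1) => z [x Vx <-] /=.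
  have hx := VU x Vx.
  apply: le_trans (abs_addle _ _) _; apply: lerD; last exact: hth.
  apply: le_trans (abs_addle _ _) _; apply: lerD => //.
  rewrite vdotE; apply: le_trans (abs_sum _) _; apply: ler_sum => i _.
  rewrite abs_mul; apply: ler_piMr; first exact: abs_ge0.
  exact: le_trans (vnorm_ge _ i) (hfn x hx).
have P2 : (0 : Rdefinitions.R) < 2 by [].
apply: (lt_le_trans P2); apply: lb_le_inf.
  pose Nb := Num.bound M0.
  pose p0 := ((fun _ : 'I_n => LS_X K Nb%:Z), (0 : LS K)).
  exists (sup [set LS_abs (LS_add (LS_add p0.2 (vdot p0.1 (f x))) (theta x)) | x in V]).
  exists p0 => //=.
  apply: le_trans (vnorm_ge _ (Ordinal hn)); rewrite abs_X.
  apply: ltW; apply: lt_le_trans (archi_boundP _) _; first by rewrite /M0; lra.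
  rewrite -exprnP -natrX ler_nat; apply: ltnW; apply: ltn_expl; exact: card_finNzRing_gt1.
move=> z [p Pp <-].
have [k hk] := key p Pp.
have Vy : V (y k) := hs _ (Wy k).
have hel : [set LS_abs (LS_add (LS_add p.2 (vdot p.1 (f x))) (theta x)) | x in V]
    (LS_abs (LS_add (LS_add p.2 (vdot p.1 (f (y k)))) (theta (y k)))) by exists (y k).
have := ub_le_sup (hub p); move/ubP => /(_ _ hel) hsup.
apply: le_trans hsup.
have hk2 := hk; apply: le_trans hk2 (abs_strict _).
apply: le_lt_trans (hth _ (VU _ Vy)) _; apply: lt_le_trans hk; lra.
Qed.
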